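(* Let $\alpha_k\in(0,1]$, $k\ge1$, be given, and let $x^l_k,x_k,x^u_k$, the level $l$ and the function $d_\omega$ be those of procedure $\mathcal{G}_{APL}(p,\mathrm{lb},\beta,\theta)$. Then for every $k\ge1$ for which $x_k$ and $x^u_k$ are computed, $$f(x^u_k)-l\le(1-\alpha_1)\gamma_k(1)[f(x^u_0)-l]+\frac{M}{1+\rho}\Big[\frac{2d_\omega(x_k)}{\sigma_\omega}\Big]^{\frac{1+\rho}{2}}\gamma_k(1)\|\Gamma_k(1,\rho)\|_{\frac{2}{1-\rho}}.$$ In particular, if $\alpha_1=1$ and for some $c>0$, $\gamma_k(1)\|\Gamma_k(1,\rho)\|_{\frac{2}{1-\rho}}\le ck^{-\frac{1+3\rho}{2}}$ for all $k\ge1$, then the number of iterations performed by the procedure is at most $$K_{APL}(\Delta_0):=\left\lceil\left(\frac{cM\Omega_{\omega,X}^{\frac{1+\rho}{2}}}{\beta\theta(1+\rho)\Delta_0}\right)^{\frac{2}{1+3\rho}}\right\rceil,\qquad \Delta_0=\overline f_0-\underline f_0.$$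
   Context: Problem: $f^*=\min_{x\in X}f(x)$, $X\subseteq\mathbb{R}^n$ nonempty convex compact, $\mathbb{R}^n$ with arbitrary norm $\|\cdot\|$; $f:X\to\mathbb{R}$ convex with oracle returning $f(x)$, $f'(x)\in\partial f(x)$ such that for some $M>0$, $\rho\in[0,1]$: $f(y)-f(x)-\langle f'(x),y-x\rangle\le\frac{M}{1+\rho}\|y-x\|^{1+\rho}$ for all $x,y\in X$. $h(z,x):=f(z)+\langle f'(z),x-z\rangle$; $\mathcal{L}_f(l):=\{x\in X:f(x)\le l\}$; a localizer of $\mathcal{L}_f(l)$ is a convex compact $X'$ with $\mathcal{L}_f(l)\subseteq X'\subseteq X$. $\omega:X\to\mathbb{R}$ differentiable, strongly convex with modulus $\sigma_\omega$ w.r.t. $\|\cdot\|$; $\mathcal{D}^2_{\omega,X}:=\max_{x,z\in X}\{\omega(x)-\omega(z)-\langle\nabla\omega(z),x-z\rangle\}$, $\Omega_{\omega,X}:=2\mathcal{D}^2_{\omega,X}/\sigma_\omega$. $\gamma_1(1)=1$, $\gamma_k(1)=(1-\alpha_k)\gamma_{k-1}(1)$; $\Gamma_k(1,\rho)=(\gamma_i(1)^{-1}\alpha_i^{1+\rho})_{i=1}^k$; $\|\cdot\|_p$ the $\ell_p$ norm ($\frac{2}{1-\rho}=\infty$ if $\rho=1$). Procedure $\mathcal{G}_{APL}(p,\mathrm{lb},\beta,\theta)$ ($p\in X$, $\beta,\theta\in(0,1)$): Step 0: $x^u_0=p$, $\overline f_0=f(p)$, $\underline f_0=\mathrm{lb}$,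 $l=\beta\underline f_0+(1-\beta)\overline f_0$; choose $x_0\in X$ and an initial localizer $X'_0$ (e.g. $x_0=p$, $X'_0=X$); $d_\omega(x)=\omega(x)-[\omega(x_0)+\langle\nabla\omega(x_0),x-x_0\rangle]$; $k=1$. Step 1: $x^l_k=(1-\alpha_k)x^u_{k-1}+\alpha_kx_{k-1}$, $\underline h_k=\min_{x\in X'_{k-1}}h(x^l_k,x)$, $\underline f_k=\max\{\underline f_{k-1},\min\{l,\underline h_k\}\}$; if $\underline f_k\ge l-\theta(l-\underline f_0)$ terminate with $p^+=x^u_{k-1}$, $\mathrm{lb}^+=\underline f_k$. Step 2: $x_k=\operatorname{argmin}_{x\in X'_{k-1}}\{d_\omega(x):h(x^l_k,x)\le l\}$. Step 3: $\overline f_k=\min\{\overline f_{k-1},f(\alpha_kx_k+(1-\alpha_k)x^u_{k-1})\}$, $x^u_k$ with $f(x^u_k)=\overline f_k$; if $\overline f_k\le l+\theta(\overline f_0-l)$ terminate with $p^+=x^u_k$, $\mathrm{lb}^+=\underline f_k$. Step 4: choose closed convex $X'_k$ with $\{x\in X'_{k-1}:h(x^l_k,x)\le l\}\subseteq X'_k\subseteq\{x\in X:\langle\nabla d_\omega(x_k),x-x_k\rangle\ge0\}$. Step 5: $k\leftarrow k+1$, go to Step 1. *)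

(* Defs.v *)
From mathcomp Require Import all_boot all_order all_algebra.
From mathcomp Require Import all_classical all_reals all_analysis.
Set Implicit Arguments. Unset Strict Implicit. Unset Printing Implicit Defensive.
Import Order.TTheory GRing.Theory Num.Theory.
Import numFieldNormedType.Exports.
Local Open Scope classical_set_scope.
Local Open Scope ring_scope.

Section APL.
Variables (R : realType) (n : nat).
Notation vec := 'rV[R]_n.

Definition dotv (g x : vec) : R := \sum_(i < n) g 0 i * x 0 i.

Definition is_norm (nrm : vec -> R) : Prop :=
  [/\ forall x, 0 <= nrm x,
      forall x, nrm x = 0 -> x = 0,
      forall (a : R) x, nrm (a *: x) = `|a| * nrm x
    & forall x y, nrm (x + y) <= nrm x + nrm y].

Definition is_convex_set (A : set vec) : Prop :=
  forall x y (t : R), A x -> A y -> 0 <= t <= 1 -> A (t *: x + (1 - t) *: y).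

Definition convex_fun_on (X : set vec) (f : vec -> R) : Prop :=
  forall x y (t : R), X x -> X y -> 0 <= t <= 1 ->
    f (t *: x + (1 - t) *: y) <= t * f x + (1 - t) * f y.

Definition hlin (f : vec -> R) (fp : vec -> vec) (z x : vec) : R :=
  f z + dotv (fp z) (x - z).

Definition level_set (X : set vec) (f : vec -> R) (l : R) : set vec :=
  [set x | X x /\ f x <= l].

Definition localizer (X : set vec) (f : vec -> R) (l : R) (X' : set vec) : Prop :=
  [/\ is_convex_set X', compact X', level_set X f l `<=` X' & X' `<=` X].

Definition d_omega (omega : vec -> R) (gw : vec -> vec) (x0 x : vec) : R :=
  omega x - (omega x0 + dotv (gw x0) (x - x0)).

(* gamma_1(1) = 1, gamma_k(1) = (1 - alpha_k) gamma_{k-1}(1) *)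
Definition gamma1 (alpha : nat -> R) (k : nat) : R :=
  \prod_(2 <= i < k.+1) (1 - alpha i).

(* Gamma_k(1,rho) = (gamma_i(1)^{-1} alpha_i^{1+rho})_{i=1..k} *)
Definition Gamma1 (alpha : nat -> R) (rho : R) (i : nat) : R :=
  (gamma1 alpha i)^-1 * alpha i `^ (1 + rho).

(* l_q norm of (a_i)_{i=1..k} with q = 2/(1-rho), q = +oo when rho = 1 *)
Definition lq_norm (rho : R) (a : nat -> R) (k : nat) : R :=
  if rho == 1 then \big[Num.max/0]_(1 <= i < k.+1) `|a i|
  else (\sum_(1 <= i < k.+1) `|a i| `^ (2 / (1 - rho))) `^ ((1 - rho) / 2).

(* min_{x in A} h(z, x) as an extended real (= +oo when A is empty) *)
Definition hmin (f : vec -> R) (fp : vec -> vec) (z : vec) (A : set vec) : \bar R :=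
  ereal_inf [set (hlin f fp z x)%:E | x in A].

(* One admissible run of G_APL(p, lb, beta, theta) in which
   - iterations 1, ..., k-1 were completed (Steps 1-4) without termination, and
   - at iteration k, Step 1 did not terminate and Steps 2 and 3 were executed
     (so x_k and x^u_k were computed).
   xl, x, xu : the sequences x^l_k, x_k, x^u_k; fup, flow : \overline f_k,
   \underline f_k; Xp : the localizers X'_k; l the level. *)
Definition APL_run (X : set vec) (f : vec -> R) (fp : vec -> vec)
    (omega : vec -> R) (gw : vec -> vec) (alpha : nat -> R)
    (p : vec) (lb beta theta : R)
    (l : R) (xl x xu : nat -> vec) (fup flow : nat -> R) (Xp : nat -> set vec)
    (k : nat) : Prop :=
  let dw := d_omega omega gw (x 0%N) in
  (* Step 0 *)
  [/\ [/\ xu 0%N = p, fup 0%N = f p, flow 0%N = lb,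
          l = beta * flow 0%N + (1 - beta) * fup 0%N &
          X (x 0%N) /\ localizer X f l (Xp 0%N)],
  (* Steps 1, 2, 3 at every iteration j = 1..k, with no termination at Step 1 *)
      (forall j, (1 <= j <= k)%N ->
        [/\ xl j = (1 - alpha j) *: xu j.-1 + alpha j *: x j.-1,
            flow j = Num.max (flow j.-1)
                       (fine (mine l%:E (hmin f fp (xl j) (Xp j.-1)))),
            flow j < l - theta * (l - flow 0%N) /\
            (* Step 2 *)
            (Xp j.-1 (x j) /\ hlin f fp (xl j) (x j) <= l) /\
            (forall y, Xp j.-1 y -> hlin f fp (xl j) y <= l -> dw (x j) <= dw y),
            (* Step 3 *)
            fup j = Num.min (fup j.-1) (f (alpha j *: x j + (1 - alpha j) *: xu j.-1))
          & X (xu j) /\ f (xu j) = fup j])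
  (* no termination at Step 3 and Step 4 executed, at iterations j = 1..k-1 *)
    & (forall j, (1 <= j < k)%N ->
        [/\ l + theta * (fup 0%N - l) < fup j,
            closed (Xp j), is_convex_set (Xp j),
            [set y | Xp j.-1 y /\ hlin f fp (xl j) y <= l] `<=` Xp j
          & Xp j `<=` [set y | X y /\ 0 <= dotv (gw (x j) - gw (x 0%N)) (y - x j)]])].

End APL.

Definition Omega_wX (R : realType) (D2 sigma : R) : R := 2 * D2 / sigma.

Definition K_APL (R : realType) (c M Omega beta theta rho Delta0 : R) : int :=
  Num.ceil ((c * M * Omega `^ ((1 + rho) / 2) / (beta * theta * (1 + rho) * Delta0))
              `^ (2 / (1 + 3 * rho))).

(* Main.v *)
Require Import Defs.
From mathcomp Require Import all_boot all_order all_algebra.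
From mathcomp Require Import all_classical all_reals all_analysis.
From mathcomp Require Import ring lra.
Import Order.TTheory GRing.Theory Num.Theory.
Import numFieldNormedType.Exports.
Local Open Scope classical_set_scope.
Local Open Scope ring_scope.
Section H.
Variable R : realType.

Lemma powR_invl (x p : R) : 0 <= x -> (x^-1) `^ p = (x `^ p)^-1.
Proof.
move=> x0; rewrite -powR_inv1 // -powRrM mulrC powRrM powR_inv1 //.
exact: powR_ge0.
Qed.

Lemma holder_sum (m k : nat) (a b : nat -> R) (p q : R) :
  (forall i, 0 <= a i) -> (forall i, 0 <= b i) ->
  0 < p -> 0 < q -> p^-1 + q^-1 = 1 ->
  \sum_(m <= i < k) a i * b i <=
  (\sum_(m <= i < k) a i `^ p) `^ p^-1 * (\sum_(m <= i < k) b i `^ q) `^ q^-1.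
Proof.
move=> a0 b0 p0 q0 pq.
set A := \sum_(m <= i < k) a i `^ p; set B := \sum_(m <= i < k) b i `^ q.
have A0 : 0 <= A by apply: sumr_ge0 => i _; exact: powR_ge0.
have B0 : 0 <= B by apply: sumr_ge0 => i _; exact: powR_ge0.
have RHS0 : 0 <= A `^ p^-1 * B `^ q^-1 by apply: mulr_ge0; exact: powR_ge0.
have [Ae|Ane] := eqVneq A 0.
  have : forall i, (m <= i < k)%N -> a i = 0.
    move=> i hi; apply: (@powR_eq0_eq0 _ _ p).
    move/eqP: Ae; rewrite psumr_eq0; last by move=> j _; exact: powR_ge0.
    move/allP => /(_ i); rewrite mem_index_iota => /(_ hi) /implyP /(_ isT).
    by move/eqP.
  move=> ha; rewrite big_nat (eq_bigr (fun=> 0)) ?big1 //.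
  by move=> i /ha ->; rewrite mul0r.
have [Be|Bne] := eqVneq B 0.
  have : forall i, (m <= i < k)%N -> b i = 0.
    move=> i hi; apply: (@powR_eq0_eq0 _ _ q).
    move/eqP: Be; rewrite psumr_eq0; last by move=> j _; exact: powR_ge0.
    move/allP => /(_ i); rewrite mem_index_iota => /(_ hi) /implyP /(_ isT).
    by move/eqP.
  move=> ha; rewrite big_nat (eq_bigr (fun=> 0)) ?big1 //.
  by move=> i /ha ->; rewrite mulr0.
have Ap : 0 < A by rewrite lt_neqAle eq_sym Ane A0.
have Bp : 0 < B by rewrite lt_neqAle eq_sym Bne B0.
set A' := A `^ p^-1; set B' := B `^ q^-1.
have A'p : 0 < A' by apply: powR_gt0.
have B'p : 0 < B' by apply: powR_gt0.
have A'e : A' `^ p = A by rewrite /A' -powRrM mulVf ?gt_eqF // powRr1.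
have B'e : B' `^ q = B by rewrite /B' -powRrM mulVf ?gt_eqF // powRr1.
clearbody A' B'.
have key : \sum_(m <= i < k) (a i / A') * (b i / B') <= 1.
  apply: (@le_trans _ _ (\sum_(m <= i < k) (a i `^ p / A / p + b i `^ q / B / q))).
    apply: ler_sum => i _.
    have h := @conjugate_powR R (a i / A') (b i / B') p q.
    have iA : 0 <= A'^-1 by rewrite invr_ge0; exact: ltW.
    have iB : 0 <= B'^-1 by rewrite invr_ge0; exact: ltW.
    have e1 : (a i / A') `^ p = a i `^ p / A.
      by rewrite (powRM p (a0 i) iA) (powR_invl A' p (ltW A'p)) A'e.
    have e2 : (b i / B') `^ q = b i `^ q / B.
      by rewrite (powRM q (b0 i) iB) (powR_invl B' q (ltW B'p)) B'e.
    rewrite e1 e2 in h.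
    apply: h => //; apply: divr_ge0 => //; exact: ltW.
  rewrite big_split /= -!mulr_suml -/A -/B !mulfV ?gt_eqF // !mul1r pq //.
have -> : \sum_(m <= i < k) a i * b i =
          A' * B' * \sum_(m <= i < k) (a i / A') * (b i / B').
  rewrite mulr_sumr; apply: eq_bigr => i _.
  by field; apply/andP; split; rewrite gt_eqF.
rewrite -[X in _ <= X]mulr1; apply: ler_wpM2l => //.
by apply: mulr_ge0; apply: ltW.
Qed.

Lemma lq_bound (rho S : R) (G N : nat -> R) (k : nat) :
  0 <= rho <= 1 -> (forall i, 0 <= G i) -> (forall i, 0 <= N i) ->
  \sum_(1 <= i < k.+1) N i ^+ 2 <= S ->
  \sum_(1 <= i < k.+1) G i * N i `^ (1 + rho)
    <= lq_norm rho G k * S `^ ((1 + rho) / 2).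
Proof.
move=> /andP[r0 r1] G0 N0 hS.
have S0 : 0 <= S.
  apply: le_trans hS; apply: sumr_ge0 => i _; exact: sqr_ge0.
rewrite /lq_norm; have [->|rne] := eqVneq rho 1.
  have e2 : (1 + 1 : R) = 2%:R by [].
  have e1 : ((1 + 1) / 2 : R) = 1 by rewrite e2 divff // pnatr_eq0.
  rewrite e1 powRr1 // e2.
  have L0 : 0 <= \big[Num.max/0]_(1 <= i < k.+1) `|G i|.
    by apply: (big_ind (fun x => 0 <= x)) => // x y hx hy; rewrite le_max hx.
  apply: (@le_trans _ _ (\sum_(1 <= i < k.+1)
       (\big[Num.max/0]_(1 <= i < k.+1) `|G i|) * N i ^+ 2)).
    rewrite big_nat [X in _ <= X]big_nat; apply: ler_sum => i hi.
    rewrite powR_mulrn //; apply: ler_wpM2r; first exact: sqr_ge0.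
    apply: le_trans (ler_norm _) _.
    by rewrite (@le_bigmax_seq _ _ _ (index_iota 1 k.+1) 0 i xpredT (fun i => `|G i|)) // mem_index_iota.
  by rewrite -mulr_sumr; apply: ler_wpM2l.
have r1' : rho < 1 by rewrite lt_neqAle rne r1.
have p0 : 0 < 2 / (1 - rho) by apply: divr_gt0 => //; rewrite subr_gt0.
have q0 : 0 < 2 / (1 + rho) by apply: divr_gt0 => //; apply: ltr_wpDr.
have ip : (2 / (1 - rho))^-1 = (1 - rho) / 2 by rewrite invf_div.
have iq : (2 / (1 + rho))^-1 = (1 + rho) / 2 by rewrite invf_div.
have pq : (2 / (1 - rho))^-1 + (2 / (1 + rho))^-1 = 1.
  by rewrite ip iq; field.
have := @holder_sum 1 k.+1 (fun i => `|G i|) (fun i => N i `^ (1 + rho)) _ _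
   (fun i => normr_ge0 _) (fun i => powR_ge0 _ _) p0 q0 pq.
rewrite ip iq.
have eN : forall i, (N i `^ (1 + rho)) `^ (2 / (1 + rho)) = N i ^+ 2.
  move=> i; rewrite -powRrM mulrC mulfVK; last by rewrite gt_eqF // ltr_wpDr.
  by rewrite (powR_mulrn 2 (N0 i)).
have eS : \sum_(1 <= i < k.+1) (N i `^ (1 + rho)) `^ (2 / (1 + rho))
    = \sum_(1 <= i < k.+1) N i ^+ 2 by apply: eq_bigr => i _; exact: eN.
have eG : \sum_(1 <= i < k.+1) `|G i| * N i `^ (1 + rho)
    = \sum_(1 <= i < k.+1) G i * N i `^ (1 + rho).
  by apply: eq_bigr => i _; rewrite ger0_norm.
rewrite eS eG.
move=> h; apply: le_trans h _; apply: ler_wpM2l; first exact: powR_ge0.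
apply: ge0_ler_powR => //.
- by apply: divr_ge0 => //; apply: addr_ge0.
- by rewrite nnegrE; apply: sumr_ge0 => i _; exact: sqr_ge0.
Qed.
End H.
Section S.
Variables (R : realType) (n : nat).
Notation vec := 'rV[R]_n.
Lemma dotv_lin (g x y : vec) (a b : R) :
  dotv g (a *: x + b *: y) = a * dotv g x + b * dotv g y.
Proof.
rewrite /dotv !mulr_sumr -big_split /=; apply: eq_bigr => i _.
by rewrite !mxE; ring.
Qed.
Lemma dotvB (g x y : vec) : dotv g (x - y) = dotv g x - dotv g y.
Proof.
rewrite /dotv -sumrB; apply: eq_bigr => i _.
by rewrite !mxE; ring.
Qed.
Lemma dotvBl (g h x : vec) : dotv (g - h) x = dotv g x - dotv h x.
Proof.
rewrite /dotv -sumrB; apply: eq_bigr => i _.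
by rewrite !mxE; ring.
Qed.
Lemma vec_id (a : R) (u y z : vec) :
  a *: y + (1 - a) *: u - ((1 - a) *: u + a *: z) = a *: (y - z).
Proof. by rewrite scalerBr opprD addrA addrK. Qed.

Lemma step_bound (X : set vec) (f : vec -> R) (fp : vec -> vec) (nrm : vec -> R)
  (M rho a l : R) (u z y w : vec) :
  is_norm nrm -> is_convex_set X ->
  (forall x y, X x -> X y -> f x + dotv (fp x) (y - x) <= f y) ->
  (forall x y, X x -> X y ->
     f y - f x - dotv (fp x) (y - x) <= M / (1 + rho) * nrm (y - x) `^ (1 + rho)) ->
  0 < a <= 1 -> X u -> X z -> X y ->
  w = (1 - a) *: u + a *: z -> hlin f fp w y <= l ->
  f (a *: y + (1 - a) *: u) - l <=
    (1 - a) * (f u - l) + M / (1 + rho) * (a `^ (1 + rho) * nrm (y - z) `^ (1 + rho)).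
Proof.
move=> [n0 _ nZ _] cX sub smo /andP[a0 a1] Xu Xz Xy ew hy.
have a01 : 0 <= a <= 1 by rewrite (ltW a0) a1.
have Xw : X w by rewrite ew addrC; apply: cX.
have Xv : X (a *: y + (1 - a) *: u) by apply: cX.
have hs := smo _ _ Xw Xv.
have hu := sub _ _ Xw Xu.
have en : nrm (a *: y + (1 - a) *: u - w) `^ (1 + rho) =
    a `^ (1 + rho) * nrm (y - z) `^ (1 + rho).
  by rewrite ew vec_id nZ ger0_norm ?(ltW a0) // powRM ?(ltW a0).
rewrite en in hs.
rewrite /hlin dotvB in hy.
rewrite dotvB in hu.
rewrite dotvB dotv_lin in hs.
set g := fp w in hs hy hu.
have h1 := ler_wpM2l (ltW a0) hy.
have h2 : (1 - a) * (f w + (dotv g u - dotv g w)) <= (1 - a) * f u.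
  by apply: ler_wpM2l => //; rewrite subr_ge0.
lra.
Qed.
Lemma dotv0 (x : vec) : dotv 0 x = 0.
Proof. by rewrite /dotv big1 // => i _; rewrite mxE mul0r. Qed.
Lemma dotvr0 (g : vec) : dotv g 0 = 0.
Proof. by rewrite /dotv big1 // => i _; rewrite mxE mulr0. Qed.

Lemma dist_step (X : set vec) (omega : vec -> R) (gw : vec -> vec) (nrm : vec -> R)
  (sigma : R) (x0 u v : vec) :
  (forall x y, X x -> X y ->
     omega x + dotv (gw x) (y - x) + sigma / 2 * nrm (y - x) ^+ 2 <= omega y) ->
  X u -> X v -> 0 <= dotv (gw u - gw x0) (v - u) ->
  d_omega omega gw x0 u + sigma / 2 * nrm (v - u) ^+ 2 <= d_omega omega gw x0 v.
Proof.
move=> sc Xu Xv hd; have := sc _ _ Xu Xv.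
rewrite /d_omega dotvBl in hd *; rewrite !dotvB in hd *.
lra.
Qed.
End S.

Lemma claim1 (R : realType) (n : nat)
  (nrm : 'rV[R]_n -> R) (X : set 'rV[R]_n)
  (f : 'rV[R]_n -> R) (fp : 'rV[R]_n -> 'rV[R]_n) (M rho : R)
  (omega : 'rV[R]_n -> R) (gw : 'rV[R]_n -> 'rV[R]_n) (sigma : R)
  (alpha : nat -> R) (p : 'rV[R]_n) (lb beta theta : R)
  l xl x xu fup flow Xp k :
  is_norm nrm -> is_convex_set X ->
  (forall x y, X x -> X y -> f x + dotv (fp x) (y - x) <= f y) ->
  0 < M -> 0 <= rho <= 1 ->
  (forall x y, X x -> X y ->
     f y - f x - dotv (fp x) (y - x) <= M / (1 + rho) * nrm (y - x) `^ (1 + rho)) ->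
  0 < sigma ->
  (forall x y, X x -> X y ->
     omega x + dotv (gw x) (y - x) + sigma / 2 * nrm (y - x) ^+ 2 <= omega y) ->
  (forall k, (1 <= k)%N -> 0 < alpha k <= 1) ->
  X p -> (1 <= k)%N ->
  APL_run X f fp omega gw alpha p lb beta theta l xl x xu fup flow Xp k ->
  (forall i, (1 <= i <= k)%N -> gamma1 alpha i != 0) ->
  f (xu k) - l <=
    (1 - alpha 1%N) * gamma1 alpha k * (f (xu 0%N) - l)
    + M / (1 + rho) * (2 * d_omega omega gw (x 0%N) (x k) / sigma) `^ ((1 + rho) / 2)
      * gamma1 alpha k * lq_norm rho (Gamma1 alpha rho) k.
Proof.
move=> nN cX sub M0 r01 smo s0 sc alph Xp_ k1 run gne.
move: run; rewrite /APL_run; cbv zeta; move=> -[[hxu0 hfup0 hflow0 hl [hx0 hloc0]] hstep hXp].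
have XpX : forall j, (j < k)%N -> Xp j `<=` X.
  case=> [|j] jk; first by case: hloc0.
  have [_ _ _ _ h] := hXp j.+1 jk.
  by move=> y /h [].
have Xx : forall j, (j <= k)%N -> X (x j).
  case=> [|j] jk //.
  have [_ _ [_ [[hxj _] _]] _ _] := hstep j.+1 jk.
  exact: (XpX j jk).
have Xxu : forall j, (j <= k)%N -> X (xu j).
  case=> [|j] jk; first by rewrite hxu0.
  by have [_ _ _ _ [] ] := hstep j.+1 jk.
pose N i := nrm (x i - x i.-1).
have N0 : forall i, 0 <= N i by move=> i; case: nN => + _ _ _; apply.
have hrec : forall j, (1 <= j <= k)%N ->
    f (xu j) - l <= (1 - alpha j) * (f (xu j.-1) - l)
       + M / (1 + rho) * (alpha j `^ (1 + rho) * N j `^ (1 + rho)).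
  move=> j hj; have /andP[j1 jk] := hj.
  have [hxl _ [_ [[hxj hh] _]] hfup [Xxuj fxuj]] := hstep j hj.
  have jk' : (j.-1 <= k)%N by apply: leq_trans (leq_pred j) jk.
  have := @step_bound R n X f fp nrm M rho (alpha j) l (xu j.-1) (x j.-1) (x j) (xl j) nN cX sub smo (alph j j1) (Xxu _ jk') (Xx _ jk') (Xx _ jk) hxl hh.
  apply: le_trans; rewrite lerD2r fxuj hfup ge_min lexx orbT //.
have gam_ge0 : forall i, 0 <= gamma1 alpha i.
  move=> i; rewrite /gamma1 big_nat; apply: prodr_ge0 => j /andP[hj _].
  have /andP[_ ] := alph j (ltnW hj); by rewrite subr_ge0.
have gam1 : gamma1 alpha 1 = 1 by rewrite /gamma1 big_geq.
have gamS : forall j, (1 <= j)%N ->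
    gamma1 alpha j.+1 = gamma1 alpha j * (1 - alpha j.+1).
  by move=> j j1; rewrite /gamma1 big_nat_recr.
have Gam_ge0 : forall i, 0 <= Gamma1 alpha rho i.
  by move=> i; apply: mulr_ge0; [rewrite invr_ge0|exact: powR_ge0].
pose T0 := (1 - alpha 1%N) * (f (xu 0%N) - l).
have ind : forall j, (1 <= j <= k)%N ->
    f (xu j) - l <= gamma1 alpha j * (T0 + M / (1 + rho) *
      \sum_(1 <= i < j.+1) Gamma1 alpha rho i * N i `^ (1 + rho)).
  elim=> [//|j IH] /andP[h1 hk].
  case: j IH h1 hk => [|j] IH h1 hk.
    rewrite gam1 big_nat1 /Gamma1 gam1 invr1 !mul1r.
    exact: (hrec 1%N hk).
  have j1 : (1 <= j.+1)%N by [].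
  have jk : (1 <= j.+1 <= k)%N by rewrite j1 (ltnW hk).
  have a01 : 0 <= 1 - alpha j.+2.
    by have /andP[_ ] := alph j.+2 isT; rewrite subr_ge0.
  have gne' : gamma1 alpha j.+1 * (1 - alpha j.+2) != 0.
    by rewrite -gamS //; apply: gne; rewrite hk.
  have e : gamma1 alpha j.+2 * (T0 + M / (1 + rho) *
      (\sum_(1 <= i < j.+2) Gamma1 alpha rho i * N i `^ (1 + rho)
       + Gamma1 alpha rho j.+2 * N j.+2 `^ (1 + rho)))
    = (1 - alpha j.+2) * (gamma1 alpha j.+1 * (T0 + M / (1 + rho) *
      \sum_(1 <= i < j.+2) Gamma1 alpha rho i * N i `^ (1 + rho)))
      + M / (1 + rho) * (alpha j.+2 `^ (1 + rho) * N j.+2 `^ (1 + rho)).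
    rewrite {2}/Gamma1 gamS //.
    move: (\sum_(1 <= i < j.+2) Gamma1 alpha rho i * N i `^ (1 + rho)) => S.
    move: gne'; move: (gamma1 alpha j.+1) (1 - alpha j.+2) => g b gb.
    clear IH; move: T0 (alpha j.+2 `^ (1 + rho)) (N j.+2 `^ (1 + rho)) (M / (1 + rho)) => t a c m.
    have hz : g * b * (g * b)^-1 = 1 by rewrite mulfV.
    move: ((g * b)^-1) hz => z hz.
    rewrite -[in RHS](mul1r a) -hz; ring.
  rewrite big_nat_recr //= e.
  have hj2 : (1 <= j.+2 <= k)%N by rewrite hk.
  have := hrec j.+2 hj2.
  have := ler_wpM2l a01 (IH jk).
  rewrite /=; lra.
have d0 : d_omega omega gw (x 0%N) (x 0%N) = 0.
  by rewrite /d_omega subrr dotvr0 addr0 subrr.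
have hsum : forall j, (j <= k)%N ->
    sigma / 2 * \sum_(1 <= i < j.+1) N i ^+ 2 <= d_omega omega gw (x 0%N) (x j).
  elim=> [|j IH] jk.
    by rewrite big_geq // mulr0 d0.
  rewrite big_nat_recr //= mulrDr.
  have hj : (1 <= j.+1 <= k)%N by rewrite jk.
  have [_ _ [_ [[hxj _] _]] _ _] := hstep j.+1 hj.
  have hd : 0 <= dotv (gw (x j) - gw (x 0%N)) (x j.+1 - x j).
    case: j IH jk hj hxj => [|j] IH jk hj hxj.
      by rewrite subrr dotv0.
    have [_ _ _ _ h] := hXp j.+1 jk.
    by have [] := h _ hxj.
  have := @dist_step R n X omega gw nrm sigma (x 0%N) (x j) (x j.+1) sc
    (Xx j (ltnW jk)) (Xx j.+1 jk) hd.
  have := IH (ltnW jk).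
  rewrite /N /=; lra.
have sumN : \sum_(1 <= i < k.+1) N i ^+ 2 <= 2 * d_omega omega gw (x 0%N) (x k) / sigma.
  rewrite ler_pdivlMr //; have := hsum k (leqnn k); lra.
have hq := @lq_bound R rho _ (Gamma1 alpha rho) N k r01 Gam_ge0 N0 sumN.
have hkk : (1 <= k <= k)%N by rewrite k1 leqnn.
have hi := ind k hkk.
have gk := gam_ge0 k.
have Mr : 0 <= M / (1 + rho).
  by apply: divr_ge0; [exact: ltW | case/andP: r01 => r0 _; apply: addr_ge0].
have := ler_wpM2l (mulr_ge0 gk Mr) hq.
move: hi; rewrite /T0.
move: (\sum_(1 <= i < k.+1) Gamma1 alpha rho i * N i `^ (1 + rho)) => S.
move: (lq_norm rho (Gamma1 alpha rho) k) => L.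
move: ((2 * d_omega omega gw (x 0%N) (x k) / sigma) `^ ((1 + rho) / 2)) => P.
move: (M / (1 + rho)) Mr => m Mr.
move=> h1 h2; apply: le_trans h1 _.
have -> : (1 - alpha 1%N) * gamma1 alpha k * (f (xu 0%N) - l) + m * P * gamma1 alpha k * L
   = gamma1 alpha k * ((1 - alpha 1%N) * (f (xu 0%N) - l)) + gamma1 alpha k * m * (L * P).
  by ring.
rewrite mulrDr lerD2l mulrA; exact: h2.
Qed.
Theorem theorem3p3 (R : realType) (n : nat)
  (nrm : 'rV[R]_n -> R) (X : set 'rV[R]_n)
  (f : 'rV[R]_n -> R) (fp : 'rV[R]_n -> 'rV[R]_n) (M rho : R)
  (omega : 'rV[R]_n -> R) (gw : 'rV[R]_n -> 'rV[R]_n) (sigma D2 : R)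
  (alpha : nat -> R) (p : 'rV[R]_n) (lb beta theta : R) :
  (* the space and the feasible set *)
  is_norm nrm ->
  X !=set0 -> is_convex_set X -> compact X ->
  (* the objective and its oracle *)
  convex_fun_on X f ->
  (forall x y, X x -> X y -> f x + dotv (fp x) (y - x) <= f y) ->
  0 < M -> 0 <= rho <= 1 ->
  (forall x y, X x -> X y ->
     f y - f x - dotv (fp x) (y - x) <= M / (1 + rho) * nrm (y - x) `^ (1 + rho)) ->
  (* the distance generating function omega, with gradient gw *)
  (forall x, X x -> differentiable omega x /\
     forall v, 'd omega x v = dotv (gw x) v) ->
  0 < sigma ->
  (forall x y, X x -> X y ->
     omega x + dotv (gw x) (y - x) + sigma / 2 * nrm (y - x) ^+ 2 <= omega y) ->
  (* D2 = D^2_{omega,X} = max_{x,z in X} {omega x - omega z - <grad omega z, x - z>} *)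
  (exists x z, [/\ X x, X z & D2 = omega x - omega z - dotv (gw z) (x - z)]) ->
  (forall x z, X x -> X z -> omega x - omega z - dotv (gw z) (x - z) <= D2) ->
  (* parameters of the procedure *)
  (forall k, (1 <= k)%N -> 0 < alpha k <= 1) ->
  X p -> 0 < beta < 1 -> 0 < theta < 1 ->
  (* first claim *)
  (forall l xl x xu fup flow Xp k, (1 <= k)%N ->
     APL_run X f fp omega gw alpha p lb beta theta l xl x xu fup flow Xp k ->
     (forall i, (1 <= i <= k)%N -> gamma1 alpha i != 0) ->
     f (xu k) - l <=
       (1 - alpha 1%N) * gamma1 alpha k * (f (xu 0%N) - l)
       + M / (1 + rho) * (2 * d_omega omega gw (x 0%N) (x k) / sigma) `^ ((1 + rho) / 2)
         * gamma1 alpha k * lq_norm rho (Gamma1 alpha rho) k)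
  /\
  (* second claim: every iteration k that is completed without termination
     satisfies k < K_APL(Delta0), i.e. at most K_APL(Delta0) iterations are performed *)
  (alpha 1%N = 1 -> forall c, 0 < c ->
     (forall i, (1 <= i)%N -> gamma1 alpha i != 0) ->
     (forall k, (1 <= k)%N ->
        gamma1 alpha k * lq_norm rho (Gamma1 alpha rho) k
          <= c * k%:R `^ (- ((1 + 3 * rho) / 2))) ->
     forall l xl x xu fup flow Xp k, (1 <= k)%N ->
       APL_run X f fp omega gw alpha p lb beta theta l xl x xu fup flow Xp k ->
       l + theta * (fup 0%N - l) < fup k ->
       (Posz k < K_APL c M (Omega_wX D2 sigma) beta theta rho (fup 0%N - flow 0%N))%R).
Proof.
move=> nN Xne cX cpX cvf sub M0 r01 smo dom s0 sc D2ex D2max alph Xp_ b01 t01.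
split.
  move=> l xl x xu fup flow Xp k k1 run gne.
  exact: (@claim1 R n nrm X f fp M rho omega gw sigma alpha p lb beta theta
            l xl x xu fup flow Xp k nN cX sub M0 r01 smo s0 sc alph Xp_ k1 run gne).
move=> a1 c c0 gne hb l xl x xu fup flow Xp k k1 run hfk.
have hkk : (1 <= k <= k)%N by rewrite k1 leqnn.
have gne' : forall i, (1 <= i <= k)%N -> gamma1 alpha i != 0.
  by move=> i /andP[i1 _]; apply: gne.
have c1 := @claim1 R n nrm X f fp M rho omega gw sigma alpha p lb beta theta
            l xl x xu fup flow Xp k nN cX sub M0 r01 smo s0 sc alph Xp_ k1 run gne'.
move: run; rewrite /APL_run; cbv zeta; move=> -[[hxu0 hfup0 hflow0 hl [hx0 hloc0]] hstep hXp].
have h1 : (1 <= 1 <= k)%N by rewrite leqnn k1.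
have [_ hfl1 [hfl1' _] _ _] := hstep 1%N h1.
case/andP: b01 => b0 b1; case/andP: t01 => t0 t1.
case/andP: r01 => r0 r1.
have Dpos : 0 < fup 0%N - flow 0%N.
  have hle : flow 0%N <= flow 1%N by rewrite hfl1 le_max lexx.
  have hA : 0 < (1 - theta) * (l - flow 0%N) by lra.
  rewrite pmulr_rgt0 in hA; last by rewrite subr_gt0.
  have hB : 0 < (1 - beta) * (fup 0%N - flow 0%N) by lra.
  by rewrite pmulr_rgt0 in hB; last by rewrite subr_gt0.
have XpX : forall j, (j < k)%N -> Xp j `<=` X.
  case=> [|j] jk; first by case: hloc0.
  have [_ _ _ _ h] := hXp j.+1 jk.
  by move=> y /h [].
have [_ _ [_ [[hxk _] _]] _ [Xxuk fxuk]] := hstep k hkk.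
have Xk : X (x k).
  apply: (XpX k.-1); last exact: hxk.
  by case: k k1 {c1 hb hfk hkk gne' hstep hXp XpX hxk Xxuk fxuk h1} => [|k].
rewrite a1 subrr !mul0r add0r fxuk in c1.
set dk := d_omega omega gw (x 0%N) (x k) in c1.
have dk0 : 0 <= dk.
  have := sc _ _ hx0 Xk.
  have : 0 <= sigma / 2 * nrm (x k - x 0%N) ^+ 2.
    by apply: mulr_ge0; [apply: divr_ge0; [exact: ltW|] | exact: sqr_ge0].
  rewrite /dk /d_omega; lra.
have dkD : dk <= D2 by have := D2max _ _ Xk hx0; rewrite /dk /d_omega; lra.
clearbody dk.
have e0 : 0 <= (1 + rho) / 2 by apply: divr_ge0 => //; apply: addr_ge0.
have hP : (2 * dk / sigma) `^ ((1 + rho) / 2) <= (Omega_wX D2 sigma) `^ ((1 + rho) / 2).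
  apply: ge0_ler_powR => //.
  - by rewrite nnegrE; apply: divr_ge0; [apply: mulr_ge0|exact: ltW].
  - rewrite nnegrE; apply: divr_ge0; [apply: mulr_ge0 => //|exact: ltW].
    exact: le_trans dkD.
  - rewrite /Omega_wX; apply: ler_wpM2r; first by rewrite invr_ge0 ltW.
    by apply: ler_wpM2l.
have Mr : 0 <= M / (1 + rho) by apply: divr_ge0; [exact: ltW | apply: addr_ge0].
have hbk := hb k k1.
have kp : (0 : R) < k%:R by rewrite ltr0n.
have ckp : 0 <= c * k%:R `^ (- ((1 + 3 * rho) / 2)) by apply: mulr_ge0; [exact: ltW|exact: powR_ge0].
have hineq : fup k - l <= M / (1 + rho) * (Omega_wX D2 sigma) `^ ((1 + rho) / 2)
                     * (c * k%:R `^ (- ((1 + 3 * rho) / 2))).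
  apply: le_trans c1 _; rewrite -mulrA.
  apply: le_trans (_ : _ <= M / (1 + rho) * (2 * dk / sigma) `^ ((1 + rho) / 2) *
                       (c * k%:R `^ (- ((1 + 3 * rho) / 2)))) _.
    by apply: ler_wpM2l => //; apply: mulr_ge0 => //; exact: powR_ge0.
  by apply: ler_wpM2r => //; apply: ler_wpM2l.
have hf0l : fup 0%N - l = beta * (fup 0%N - flow 0%N) by rewrite hl; ring.
have hlt : theta * (beta * (fup 0%N - flow 0%N)) <
    M / (1 + rho) * (Omega_wX D2 sigma) `^ ((1 + rho) / 2) * (c * k%:R `^ (- ((1 + 3 * rho) / 2))).
  rewrite -hf0l; lra.
rewrite powRN in hlt.
rewrite /K_APL ceil_gt_int.
change ((k%:R : R) < (c * M * Omega_wX D2 sigma `^ ((1 + rho) / 2) /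
  (beta * theta * (1 + rho) * (fup 0%N - flow 0%N))) `^ (2 / (1 + 3 * rho))).
have e3p : 0 < (1 + 3 * rho) / 2.
  by apply: divr_gt0 => //; apply: ltr_wpDr => //; apply: mulr_ge0.
have qp : 0 < 2 / (1 + 3 * rho).
  by apply: divr_gt0 => //; apply: ltr_wpDr => //; apply: mulr_ge0.
have eK : (k%:R : R) = (k%:R `^ ((1 + 3 * rho) / 2)) `^ (2 / (1 + 3 * rho)).
  rewrite -powRrM.
  have -> : (1 + 3 * rho) / 2 * (2 / (1 + 3 * rho)) = 1.
    by field; rewrite gt_eqF // ltr_wpDr // mulr_ge0.
  by rewrite powRr1 // ltW.
rewrite [X in X < _]eK; apply: gt0_ltr_powR => //.
- by rewrite nnegrE; exact: powR_ge0.
- rewrite nnegrE; apply: divr_ge0.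
    by apply: mulr_ge0; [apply: mulr_ge0; exact: ltW|exact: powR_ge0].
  apply: mulr_ge0; last exact: ltW.
  by apply: mulr_ge0; [apply: mulr_ge0; exact: ltW| apply: addr_ge0].
have up : 0 < k%:R `^ ((1 + 3 * rho) / 2) by apply: powR_gt0.
have rp : 0 < 1 + rho by apply: ltr_wpDr.
move: hlt up Dpos rp.
move: (k%:R `^ ((1 + 3 * rho) / 2)) (Omega_wX D2 sigma `^ ((1 + rho) / 2))
      (fup 0%N - flow 0%N) => u w D hlt up Dp rp.
have den : 0 < beta * theta * (1 + rho) * D.
  by apply: mulr_gt0 => //; apply: mulr_gt0 => //; apply: mulr_gt0.
rewrite ltr_pdivlMr //.
have hm : theta * (beta * D) * (u * (1 + rho)) <
    M / (1 + rho) * w * (c * u^-1) * (u * (1 + rho)).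
  by rewrite ltr_pM2r // mulr_gt0.
have eR : M / (1 + rho) * w * (c * u^-1) * (u * (1 + rho)) = c * M * w.
  by field; rewrite !gt_eqF.
rewrite eR in hm.
have eL : theta * (beta * D) * (u * (1 + rho)) = u * (beta * theta * (1 + rho) * D).
  by ring.
by rewrite eL in hm.
Qed.
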